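(* Let $(X,d)$ be a quasi-pseudometric space. If every $\bar d$-bounded sequence in $X$ contains a $d^s$-convergent subsequence, then $X$ is right Smyth complete, i.e. every right $d$-$K$-Cauchy sequence in $X$ is $d^s$-convergent.
   Context: A quasi-pseudometric on $X$ is a map $d:X\times X\to[0,\infty)$ with $d(x,x)=0$ and $d(x,z)\le d(x,y)+d(y,z)$ for all $x,y,z$. Its conjugate is $\bar d(x,y)=d(y,x)$ and $d^s(x,y)=\max\{d(x,y),d(y,x)\}$ (a pseudometric); $x_n$ is $d^s$-convergent to $x$ iff $d(x,x_n)\to0$ and $d(x_n,x)\to0$. A set $Y\subseteq X$ is $\bar d$-bounded if there are $x\in X$, $r>0$ with $\bar d(x,y)\le r$ for all $y\in Y$; a sequence is $\bar d$-bounded if its set of terms is. A sequence $(x_n)$ is right $d$-$K$-Cauchy if for every $\varepsilon>0$ there is $n_\varepsilon$ such that $d(x_m,x_n)<\varepsilon$ whenever $n_\varepsilon\le n<m$. *)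

(* Defs.v *)
From Stdlib Require Import Reals.
Open Scope R_scope.

Definition quasi_pseudometric {X : Type} (d : X -> X -> R) : Prop :=
  (forall x y, 0 <= d x y) /\
  (forall x, d x x = 0) /\
  (forall x y z, d x z <= d x y + d y z).

Definition conj_qpm {X : Type} (d : X -> X -> R) : X -> X -> R :=
  fun x y => d y x.

Definition sym_qpm {X : Type} (d : X -> X -> R) : X -> X -> R :=
  fun x y => Rmax (d x y) (d y x).

Definition ds_converges_to {X : Type} (d : X -> X -> R) (u : nat -> X) (x : X) : Prop :=
  forall eps, 0 < eps -> exists N, forall n, (N <= n)%nat -> sym_qpm d x (u n) < eps.

Definition ds_convergent {X : Type} (d : X -> X -> R) (u : nat -> X) : Prop :=
  exists x, ds_converges_to d u x.

Definition bounded_set {X : Type} (e : X -> X -> R) (Y : X -> Prop) : Prop :=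
  exists x r, 0 < r /\ forall y, Y y -> e x y <= r.

Definition bounded_seq {X : Type} (e : X -> X -> R) (u : nat -> X) : Prop :=
  bounded_set e (fun y => exists n, u n = y).

Definition strictly_increasing (phi : nat -> nat) : Prop :=
  forall n m, (n < m)%nat -> (phi n < phi m)%nat.

Definition right_K_Cauchy {X : Type} (d : X -> X -> R) (u : nat -> X) : Prop :=
  forall eps, 0 < eps -> exists N, forall n m, (N <= n)%nat -> (n < m)%nat ->
    d (u m) (u n) < eps.

Definition right_Smyth_complete {X : Type} (d : X -> X -> R) : Prop :=
  forall u : nat -> X, right_K_Cauchy d u -> ds_convergent d u.

(* Main.v *)
Require Import Defs.
From Stdlib Require Import Reals Lra Lia Arith.
Open Scope R_scope.

Lemma fin_bound {X : Type} (d : X -> X -> R) (u : nat -> X) (x : X) (N : nat) :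
  exists r, 0 < r /\ forall k, (k <= N)%nat -> d (u k) x <= r.
Proof.
  induction N as [|N [r [Hr H]]].
  - exists (Rabs (d (u 0%nat) x) + 1). split. pose proof (Rabs_pos (d (u 0%nat) x)); lra.
    intros k Hk. assert (k = 0%nat) by lia. subst. pose proof (RRle_abs (d (u 0%nat) x)); lra.
  - exists (r + Rabs (d (u (S N)) x)). split. pose proof (Rabs_pos (d (u (S N)) x)); lra.
    intros k Hk. destruct (Nat.eq_dec k (S N)).
    + subst. pose proof (RRle_abs (d (u (S N)) x)); lra.
    + assert (k <= N)%nat by lia. specialize (H k H0). pose proof (Rabs_pos (d (u (S N)) x)); lra.
Qed.

Lemma si_ge (phi : nat -> nat) : strictly_increasing phi -> forall k, (k <= phi k)%nat.
Proof.
  intros H k. induction k. lia. specialize (H k (S k)). assert (k < S k)%nat by lia. specialize (H H0). lia.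
Qed.

Theorem mainTheorem2 (X : Type) (d : X -> X -> R) :
  quasi_pseudometric d ->
  (forall u : nat -> X, bounded_seq (conj_qpm d) u ->
     exists phi : nat -> nat, strictly_increasing phi /\
       ds_convergent d (fun n => u (phi n))) ->
  right_Smyth_complete d.
Proof.
  intros [Hpos [Hrefl Htri]] Hcomp u Hc.
  assert (Hb : bounded_seq (conj_qpm d) u).
  { destruct (Hc 1 ltac:(lra)) as [N1 HN1].
    destruct (fin_bound d u (u N1) N1) as [r [Hr Hk]].
    exists (u N1), (r + 1). split. lra.
    intros y [n <-]. unfold conj_qpm.
    destruct (le_lt_dec n N1). specialize (Hk n l); lra.
    specialize (HN1 N1 n (le_n _) l). lra. }
  destruct (Hcomp u Hb) as [phi [Hphi [x Hx]]].
  pose proof (si_ge phi Hphi) as Hge.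
  exists x. intros eps Heps.
  destruct (Hx (eps/2) ltac:(lra)) as [K HK].
  destruct (Hc (eps/2) ltac:(lra)) as [N HN].
  exists (S (phi (Nat.max K N))). intros n Hn.
  unfold sym_qpm in *. apply Rmax_lub_lt.
  -
    set (k := Nat.max K (S n)).
    assert (H1 := HK k ltac:(lia)). simpl in H1.
    assert (H2 : d x (u (phi k)) < eps/2) by (eapply Rle_lt_trans; [apply Rmax_l|exact H1]).
    assert (Hk := Hge k).
    assert (Hm := Hge (Nat.max K N)).
    assert (Hkn : (S n <= k)%nat) by (unfold k; lia).
    assert (H3 := HN n (phi k) ltac:(lia) ltac:(lia)).
    pose proof (Htri x (u (phi k)) (u n)). lra.
  - set (k := Nat.max K N).
    assert (H1 := HK k ltac:(lia)). simpl in H1.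
    assert (H2 : d (u (phi k)) x < eps/2) by (eapply Rle_lt_trans; [apply Rmax_r|exact H1]).
    assert (Hk := Hge k).
    assert (HkN : (N <= k)%nat) by (unfold k; lia).
    assert (Hnk : (phi k < n)%nat) by (unfold k; lia).
    assert (H3 := HN (phi k) n ltac:(lia) ltac:(lia)).
    pose proof (Htri (u n) (u (phi k)) x). lra.
Qed.
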